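(* Let $R>0$ and $\alpha_0\in(0,\frac{3}{4R})$, and define $\{\alpha_k\}_{k\ge0}$ by $$\alpha_{k+1}=\alpha_k\left(1-\frac{1}{(k+1)(k+3)}\,\frac{\alpha_k^2R^2}{1-\alpha_k^2R^2}\right),\qquad k\ge 0.$$ Then $\{\alpha_k\}_{k\ge0}$ is well defined, monotonically decreasing, and converges to a positive limit. In particular, when $\alpha_0=\frac{0.618}{R}$, one has $\lim_{k\to\infty}\alpha_k\approx\frac{0.437}{R}$. *)

(* Defs.v *)
From Stdlib Require Import Reals.
Open Scope R_scope.

Fixpoint alpha_seq (Rc a0 : R) (k : nat) : R :=
  match k with
  | O => a0
  | S j =>
      let a := alpha_seq Rc a0 j in
      a * (1 - / ((INR j + 1) * (INR j + 3)) *
               ((a ^ 2 * Rc ^ 2) / (1 - a ^ 2 * Rc ^ 2)))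
  end.

(* Main.v *)
Require Import Defs.
From Stdlib Require Import Reals.
From Stdlib Require Import QArith Qreals Lra Lia List.
Open Scope R_scope.

Definition xs (x0 : R) (n : nat) := alpha_seq 1 x0 n.
Definition cR (k : nat) := (INR k + 1) * (INR k + 3).
Definition hh (k : nat) := / 2 * (/ (INR k + 1) + / (INR k + 2)).
Definition Qf (u : R) := u ^ 3 / (1 - u ^ 2).

Lemma alpha_S Rc a0 k : alpha_seq Rc a0 (S k) =
  alpha_seq Rc a0 k * (1 - / ((INR k + 1) * (INR k + 3)) *
     ((alpha_seq Rc a0 k ^ 2 * Rc ^ 2) / (1 - alpha_seq Rc a0 k ^ 2 * Rc ^ 2))).
Proof. reflexivity. Qed.

Lemma scale Rc a0 k : Rc * alpha_seq Rc a0 k = alpha_seq 1 (Rc * a0) k.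
Proof.
  induction k as [|k IH]; [reflexivity|].
  rewrite !alpha_S, <- IH.
  set (a := alpha_seq Rc a0 k).
  replace ((Rc * a) ^ 2 * 1 ^ 2) with (a ^ 2 * Rc ^ 2) by ring.
  ring.
Qed.

Lemma cR_pos k : 0 < cR k.
Proof. unfold cR; pose proof (pos_INR k); nra. Qed.

Lemma step_eq x0 k : 0 < xs x0 k < 1 ->
  xs x0 (S k) = xs x0 k - xs x0 k ^ 3 / (cR k * (1 - xs x0 k ^ 2)).
Proof.
  intros H. unfold xs. rewrite alpha_S. fold (xs x0 k).
  pose proof (cR_pos k). unfold cR in *.
  set (a := xs x0 k) in *.
  assert (1 - a^2 <> 0) by nra.
  assert ((INR k + 1) * (INR k + 3) <> 0) by lra.
  replace (a^2*1^2) with (a^2) by ring. pose proof (pos_INR k).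
  field. repeat split; auto; lra.
Qed.

Lemma g_mono a b : 0 <= a -> a <= b -> b < 1 -> Qf a <= Qf b.
Proof.
  intros Ha Hab Hb. unfold Qf.
  assert (H1 : a^3*(1-b^2) <= b^3*(1-a^2)).
  { assert (0 <= (b-a)*(b*b+a*b+a*a - a*a*b*b)).
    { apply Rmult_le_pos; [lra|]. assert (b*b <= 1) by nra.
      assert (a*a*(b*b) <= a*a*1) by (apply Rmult_le_compat_l; nra).
      assert (0 <= a*b) by nra. nra. }
    nra. }
  assert (0 < 1 - a^2) by nra. assert (0 < 1 - b^2) by nra.
  replace (a^3/(1-a^2)) with (a^3*(1-b^2) * /((1-a^2)*(1-b^2))) by (field; split; lra).
  replace (b^3/(1-b^2)) with (b^3*(1-a^2) * /((1-a^2)*(1-b^2))) by (field; split; lra).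
  apply Rmult_le_compat_r; [left; apply Rinv_0_lt_compat; nra | exact H1].
Qed.

Lemma Qf_nonneg a : 0 <= a < 1 -> 0 <= Qf a.
Proof. intros H. unfold Qf. apply Rmult_le_pos; [apply pow_le; lra|].
  left; apply Rinv_0_lt_compat; nra. Qed.

Lemma step_bounds x0 k l u : 0 < l -> l <= xs x0 k <= u -> u < 1 ->
  l - Qf u / cR k <= xs x0 (S k) <= u - Qf l / cR k /\ xs x0 (S k) <= xs x0 k.
Proof.
  intros Hl [H1 H2] Hu. rewrite step_eq by lra.
  pose proof (cR_pos k). set (a := xs x0 k) in *.
  replace (a ^ 3 / (cR k * (1 - a ^ 2))) with (Qf a / cR k) by (unfold Qf; field; split; nra).
  pose proof (g_mono l a ltac:(lra) H1 ltac:(lra)).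
  pose proof (g_mono a u ltac:(lra) H2 ltac:(lra)).
  pose proof (Qf_nonneg l ltac:(lra)).
  assert (Hc : 0 < / cR k) by (apply Rinv_0_lt_compat; lra).
  unfold Rdiv. repeat split; nra.
Qed.

Lemma hh_diff k : hh k - hh (S k) = / cR k.
Proof. unfold hh, cR. rewrite S_INR. pose proof (pos_INR k). field. lra. Qed.

Lemma hh_pos k : 0 <= hh k.
Proof. unfold hh. pose proof (pos_INR k).
  assert (0 < / (INR k + 1)) by (apply Rinv_0_lt_compat; lra).
  assert (0 < / (INR k + 2)) by (apply Rinv_0_lt_compat; lra). lra. Qed.

Lemma tail_low x0 N b U : 0 < b -> b <= xs x0 N -> xs x0 N <= U -> U < 1 ->
  0 < b - Qf U * hh N ->
  forall n, b - Qf U * (hh N - hh (N + n)) <= xs x0 (N + n) /\ xs x0 (N + n) <= xs x0 N.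
Proof.
  intros Hb H1 H2 HU Hpos n. pose proof (Qf_nonneg U ltac:(lra)) as HQ.
  induction n as [|n [IH1 IH2]].
  - rewrite Nat.add_0_r. split; [|lra]. replace (hh N - hh N) with 0 by ring. lra.
  - pose proof (hh_pos (N + n)).
    assert (Hx : 0 < xs x0 (N+n)) by nra.
    destruct (step_bounds x0 (N+n) (xs x0 (N+n)) U Hx ltac:(lra) HU) as [[A B] C].
    rewrite Nat.add_succ_r.
    pose proof (hh_diff (N+n)) as Hd. split; [|lra].
    assert (Qf U * (hh N - hh (S (N + n))) = Qf U * (hh N - hh (N+n)) + Qf U / cR (N+n)).
    { unfold Rdiv. rewrite <- Hd. ring. }
    lra.
Qed.

Lemma tail_up x0 N m : 0 < m -> (forall n, m <= xs x0 (N + n) < 1) ->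
  forall n, xs x0 (N + n) <= xs x0 N - Qf m * (hh N - hh (N + n)).
Proof.
  intros Hm Hall n. induction n as [|n IH].
  - rewrite Nat.add_0_r. replace (hh N - hh N) with 0 by ring. lra.
  - destruct (Hall n) as [A B].
    destruct (step_bounds x0 (N+n) m (xs x0 (N+n)) Hm ltac:(lra) B) as [[C D] E].
    rewrite Nat.add_succ_r. pose proof (hh_diff (N+n)).
    assert (Qf m * (hh N - hh (S (N + n))) = Qf m * (hh N - hh (N+n)) + Qf m / cR (N+n)).
    { unfold Rdiv. rewrite <- H. ring. }
    lra.
Qed.

Lemma core x0 : 0 < x0 < 3/4 ->
  forall n, x0 - Qf x0 * hh 0 <= xs x0 n /\ xs x0 n <= x0.
Proof.
  intros H.
  assert (Hp : 0 < x0 - Qf x0 * hh 0).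
  { unfold Qf, hh. simpl INR.
    replace (x0 - x0^3/(1-x0^2) * (/2 * (/(0+1) + /(0+2)))) with
      (x0 * (1 - 7/4 * x0^2) / (1 - x0^2)) by (field; nra).
    apply Rdiv_lt_0_compat; [|nra]. apply Rmult_lt_0_compat; nra. }
  intros n. destruct (tail_low x0 0 x0 x0 ltac:(lra) ltac:(unfold xs; simpl; lra)
     ltac:(unfold xs; simpl; lra) ltac:(lra) Hp n) as [A B].
  simpl in A, B. pose proof (hh_pos n). assert (0 <= Qf x0) by (apply Qf_nonneg; lra).
  unfold xs at 2 in B. simpl in B. split; nra.
Qed.

Lemma core_dec x0 : 0 < x0 < 3/4 -> forall n, 0 < xs x0 n < 1 /\ xs x0 (S n) <= xs x0 n.
Proof.
  intros H n.
  assert (Hp : 0 < x0 - Qf x0 * hh 0).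
  { unfold Qf, hh. simpl INR.
    replace (x0 - x0^3/(1-x0^2) * (/2 * (/(0+1) + /(0+2)))) with
      (x0 * (1 - 7/4 * x0^2) / (1 - x0^2)) by (field; nra).
    apply Rdiv_lt_0_compat; [|nra]. apply Rmult_lt_0_compat; nra. }
  destruct (core x0 H n).
  assert (0 < xs x0 n < 1) by lra. split; [auto|].
  destruct (step_bounds x0 n (xs x0 n) (xs x0 n)) as [_ C]; lra.
Qed.

Lemma cv_ge u L c N : Un_cv u L -> (forall n, (N <= n)%nat -> c <= u n) -> c <= L.
Proof.
  intros Hcv Hc. destruct (Rle_lt_dec c L) as [|Hlt]; [auto|].
  destruct (Hcv (c - L) ltac:(lra)) as [n0 Hn0].
  specialize (Hn0 (max n0 N) (Nat.le_max_l _ _)). specialize (Hc (max n0 N) (Nat.le_max_r _ _)).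
  unfold R_dist in Hn0. apply Rabs_def2 in Hn0. lra.
Qed.

Lemma cv_le u L c N : Un_cv u L -> (forall n, (N <= n)%nat -> u n <= c) -> L <= c.
Proof.
  intros Hcv Hc. destruct (Rle_lt_dec L c) as [|Hlt]; [auto|].
  destruct (Hcv (L - c) ltac:(lra)) as [n0 Hn0].
  specialize (Hn0 (max n0 N) (Nat.le_max_l _ _)). specialize (Hc (max n0 N) (Nat.le_max_r _ _)).
  unfold R_dist in Hn0. apply Rabs_def2 in Hn0. lra.
Qed.

Lemma dec_le u N : (forall n, u (S n) <= u n) -> forall n, (N <= n)%nat -> u n <= u N.
Proof.
  intros Hd n Hn. induction Hn; [lra|]. specialize (Hd m). lra.
Qed.

Lemma cv_scale u v l k : 0 < k -> (forall n, v n = k * u n) -> Un_cv u l -> Un_cv v (k * l).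
Proof.
  intros Hk Hv Hcv eps He. destruct (Hcv (eps / k)) as [N HN].
  { apply Rdiv_lt_0_compat; lra. }
  exists N. intros n Hn. specialize (HN n Hn). unfold R_dist in *. rewrite Hv.
  replace (k * u n - k * l) with (k * (u n - l)) by ring.
  rewrite Rabs_mult, (Rabs_right k) by lra.
  apply Rmult_lt_compat_l with (r := k) in HN; [|lra].
  replace (k * (eps / k)) with eps in HN by (field; lra). lra.
Qed.

Open Scope Q_scope.
Definition cQ (k : nat) : Q := inject_Z (Z.of_nat ((k+1)*(k+3))).
Definition QfQ (u : Q) : Q := u*u*u / (1 - u*u).
Definition lowQ k l u := l - QfQ u / cQ k.
Definition upQ k l u := u - QfQ l / cQ k.
Fixpoint chk (k : nat) (l u : Q) (s : list (Q*Q)) : bool :=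
  match s with
  | nil => true
  | (l', u') :: s' => negb (Qle_bool l 0) && Qle_bool l u && negb (Qle_bool 1 u)
       && Qle_bool l' (lowQ k l u) && Qle_bool (upQ k l u) u' && chk (S k) l' u' s'
  end.
Fixpoint lastp (p : Q*Q) (s : list (Q*Q)) : Q*Q :=
  match s with nil => p | p' :: s' => lastp p' s' end.
Definition hQ (k : nat) : Q :=
  (1#2) * (1 / inject_Z (Z.of_nat (k+1)) + 1 / inject_Z (Z.of_nat (k+2))).
Close Scope Q_scope.

Lemma Q2R_inj z : Q2R (inject_Z z) = IZR z.
Proof. unfold Q2R; simpl. field. Qed.
Lemma Q2R_0 : Q2R 0 = 0. Proof. unfold Q2R; simpl. ring. Qed.
Lemma Q2R_1 : Q2R 1 = 1. Proof. unfold Q2R; simpl. field. Qed.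

Lemma Qnz (q : Q) : Q2R q <> 0 -> ~ (q == 0)%Q.
Proof. intros H E. apply Qeq_eqR in E. rewrite Q2R_0 in E. auto. Qed.

Lemma Q2R_cQ k : Q2R (cQ k) = cR k.
Proof. unfold cQ, cR. rewrite Q2R_inj, <- INR_IZR_INZ, mult_INR, !plus_INR. simpl. ring. Qed.

Lemma Q2R_QfQ u : 0 <= Q2R u < 1 -> Q2R (QfQ u) = Qf (Q2R u).
Proof.
  intros H. unfold QfQ, Qf.
  assert (Q2R (1 - u*u) <> 0) by (rewrite Q2R_minus, Q2R_mult, Q2R_1; nra).
  rewrite Q2R_div by (apply Qnz; auto).
  rewrite Q2R_minus, !Q2R_mult, Q2R_1. simpl. field. nra.
Qed.

Lemma Q2R_divc q k : Q2R (q / cQ k) = Q2R q / cR k.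
Proof.
  pose proof (cR_pos k).
  rewrite Q2R_div, Q2R_cQ; auto. apply Qnz. rewrite Q2R_cQ. lra.
Qed.

Lemma Q2R_hQ k : Q2R (hQ k) = hh k.
Proof.
  unfold hQ, hh. pose proof (pos_INR k).
  assert (E1 : Q2R (inject_Z (Z.of_nat (k+1))) = INR k + 1)
    by (rewrite Q2R_inj, <- INR_IZR_INZ, plus_INR; simpl; ring).
  assert (E2 : Q2R (inject_Z (Z.of_nat (k+2))) = INR k + 2)
    by (rewrite Q2R_inj, <- INR_IZR_INZ, plus_INR; simpl; ring).
  rewrite Q2R_mult, Q2R_plus, !Q2R_div; try (apply Qnz; try rewrite E1; try rewrite E2; lra).
  rewrite E1, E2, Q2R_1. unfold Q2R at 1; simpl. field. lra.
Qed.

Lemma Qle_b a b : Qle_bool a b = true -> Q2R a <= Q2R b.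
Proof. intros H. apply Qle_Rle. apply Qle_bool_iff. auto. Qed.
Lemma Qlt_b a b : negb (Qle_bool b a) = true -> Q2R a < Q2R b.
Proof. intros H. apply Qlt_Rlt. apply Qnot_le_lt. intros E.
  apply Qle_bool_iff in E. rewrite E in H. discriminate. Qed.

Lemma chk_ok x0 s : forall k l u, chk k l u s = true ->
  Q2R l <= xs x0 k <= Q2R u ->
  Q2R (fst (lastp (l,u) s)) <= xs x0 (k + length s) <= Q2R (snd (lastp (l,u) s)).
Proof.
  induction s as [|[l' u'] s IH]; intros k l u Hc Hb.
  - simpl. rewrite Nat.add_0_r. auto.
  - simpl in Hc. repeat (apply andb_prop in Hc; destruct Hc as [Hc ?]).
    apply Qlt_b in Hc. rewrite Q2R_0 in Hc. apply Qle_b in H3.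
    apply Qlt_b in H2. rewrite Q2R_1 in H2. apply Qle_b in H1. apply Qle_b in H0.
    simpl lastp. simpl length. rewrite Nat.add_succ_r, <- Nat.add_succ_l.
    apply IH; auto.
    destruct (step_bounds x0 k (Q2R l) (Q2R u)) as [[A B] _]; auto.
    unfold lowQ, upQ in *. rewrite Q2R_minus, Q2R_divc, Q2R_QfQ in H1, H0 by lra.
    lra.
Qed.

Definition cert : list (Q*Q) := ((245353827037#500000000000,19628306163#40000000000)::(235626603793#500000000000,117813301897#250000000000)::(92456872469#200000000000,115571090587#250000000000)::(457049179379#1000000000000,57131147423#125000000000)::(453601030159#1000000000000,226800515083#500000000000)::(22557647463#50000000000,112788237317#250000000000)::(449322885043#1000000000000,112330721263#250000000000)::(447902116113#1000000000000,447902116123#1000000000000)::(446766690039#1000000000000,8935333801#20000000000)::(89167649817#200000000000,222919124549#500000000000)::(222532392921#500000000000,6954137279#15625000000)::(444410404637#1000000000000,111102601163#250000000000)::(17753980811#40000000000,443849520291#1000000000000)::(443363398587#1000000000000,110840849651#250000000000)::(442938004073#1000000000000,442938004091#1000000000000)::(442562611961#1000000000000,22128130599#50000000000)::(11055722133#25000000000,22111444267#50000000000)::(88386048977#200000000000,220965122453#500000000000)::(22083071431#50000000000,220830714321#500000000000)::(441418177509#1000000000000,110354544383#250000000000)::nil)%Q.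

Lemma cert_chk : chk 0 (618#1000)%Q (618#1000)%Q cert = true.
Proof. vm_compute. reflexivity. Qed.

Lemma x20 : Q2R (fst (lastp ((618#1000)%Q,(618#1000)%Q) cert)) <= xs (618/1000) 20
   <= Q2R (snd (lastp ((618#1000)%Q,(618#1000)%Q) cert)).
Proof.
  pose proof (chk_ok (618/1000) cert 0 _ _ cert_chk) as H.
  simpl length in H. simpl Nat.add in H. apply H.
  replace (Q2R (618#1000)%Q) with (618/1000) by (unfold Q2R; simpl; field).
  unfold xs; simpl; lra.
Qed.

Definition l20 := fst (lastp ((618#1000)%Q,(618#1000)%Q) cert).
Definition u20 := snd (lastp ((618#1000)%Q,(618#1000)%Q) cert).

Lemma c1 : Qle_bool 0 l20 = true /\ negb (Qle_bool l20 0) = true /\ negb (Qle_bool 1 u20) = true.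
Proof. vm_compute. auto. Qed.
Lemma c2 : Qle_bool (436#1000) (l20 - QfQ u20 * hQ 20) = true.
Proof. vm_compute. reflexivity. Qed.
Lemma c3 : Qle_bool (u20 - QfQ (436#1000) * (hQ 20 - hQ 100)) (438#1000) = true.
Proof. vm_compute. reflexivity. Qed.

Lemma final_bounds L : Un_cv (xs (618/1000)) L -> 436/1000 <= L <= 438/1000.
Proof.
  intros Hcv.
  assert (Hx0 : 0 < 618/1000 < 3/4) by lra.
  pose proof (core_dec _ Hx0) as Hd.
  destruct c1 as [_ [A1 A2]]. apply Qlt_b in A1. apply Qlt_b in A2.
  rewrite Q2R_0 in A1. rewrite Q2R_1 in A2.
  pose proof x20 as X. fold l20 u20 in X.
  pose proof (Qle_b _ _ c2) as C2. pose proof (Qle_b _ _ c3) as C3.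
  assert (E436 : Q2R (436#1000) = 436/1000) by (unfold Q2R; simpl; field).
  assert (E438 : Q2R (438#1000) = 438/1000) by (unfold Q2R; simpl; field).
  rewrite Q2R_minus, Q2R_mult, Q2R_QfQ, Q2R_hQ, E436 in C2 by lra.
  rewrite Q2R_minus, Q2R_mult, Q2R_minus, Q2R_QfQ, !Q2R_hQ, E436, E438 in C3
    by (rewrite E436; lra).
  pose proof (Qf_nonneg (Q2R u20) ltac:(lra)) as HQ.
  pose proof (hh_pos 20).
  assert (Hlow : forall n, 436/1000 <= xs (618/1000) (20 + n)).
  { intros n.
    destruct (tail_low (618/1000) 20 (Q2R l20) (Q2R u20) A1 ltac:(lra) ltac:(lra) A2
      ltac:(lra) n) as [B _].
    pose proof (hh_pos (20+n)). nra. }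
  split.
  - apply (cv_ge _ _ _ 20 Hcv). intros n Hn.
    replace n with (20 + (n - 20))%nat by lia. apply Hlow.
  - apply (cv_le _ _ _ 100 Hcv). intros n Hn.
    eapply Rle_trans. apply (dec_le _ 100); [intros k; apply Hd | exact Hn].
    assert (Hall : forall n, 436/1000 <= xs (618/1000) (20 + n) < 1).
    { intros k. split; [apply Hlow|apply Hd]. }
    pose proof (tail_up (618/1000) 20 (436/1000) ltac:(lra) Hall 80) as T.
    simpl Nat.add in T.
    pose proof (Qf_nonneg (436/1000) ltac:(lra)).
    assert (hh 20 - hh 100 >= 0).
    { unfold hh. simpl INR. 
      replace (INR 20) with 20 by (simpl; ring).
      replace (INR 100) with 100 by (simpl; ring). lra. }
    nra.
Qed.

Lemma alpha_xs Rc a0 k : 0 < Rc -> alpha_seq Rc a0 k = / Rc * xs (Rc * a0) k.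
Proof. intros H. unfold xs. rewrite <- scale. field. lra. Qed.

Theorem lemma1 :
  (forall (Rc a0 : R), 0 < Rc -> 0 < a0 -> a0 < 3 / (4 * Rc) ->
     (* well defined: the denominators 1 - alpha_k^2 R^2 never vanish *)
     (forall k : nat, 1 - (alpha_seq Rc a0 k) ^ 2 * Rc ^ 2 <> 0) /\
     (* monotonically decreasing *)
     (forall k : nat, alpha_seq Rc a0 (S k) <= alpha_seq Rc a0 k) /\
     (* converges to a positive limit *)
     (exists L : R, 0 < L /\ Un_cv (alpha_seq Rc a0) L)) /\
  (forall (Rc L : R), 0 < Rc ->
     Un_cv (alpha_seq Rc ((618 / 1000) / Rc)) L ->
     Rabs (Rc * L - 437 / 1000) <= 1 / 1000).
Proof.
  split.
  - intros Rc a0 HR Ha Ha'.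
    assert (Hx0 : 0 < Rc * a0 < 3/4).
    { split; [nra|].
      apply Rmult_lt_compat_l with (r := Rc) in Ha'; [|lra].
      replace (Rc * (3 / (4 * Rc))) with (3/4) in Ha' by (field; lra). lra. }
    pose proof (core_dec _ Hx0) as Hd.
    assert (HiR : 0 < / Rc) by (apply Rinv_0_lt_compat; lra).
    split; [|split].
    + intros k. rewrite alpha_xs by lra. destruct (Hd k) as [[A B] _].
      replace ((/ Rc * xs (Rc * a0) k) ^ 2 * Rc ^ 2) with (xs (Rc * a0) k ^ 2)
        by (field; lra). nra.
    + intros k. rewrite !alpha_xs by lra. destruct (Hd k) as [_ C].
      apply Rmult_le_compat_l; lra.
    + destruct (decreasing_cv (xs (Rc * a0))) as [Lx HLx].
      * intros n. apply Hd.
      * exists 0. intros y [i ->]. unfold opp_seq. destruct (Hd i) as [[A _] _]. lra.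
      * exists (/ Rc * Lx). split.
        -- apply Rmult_lt_0_compat; [lra|].
           assert (Hp : 0 < Rc * a0 - Qf (Rc * a0) * hh 0).
           { unfold Qf, hh. simpl INR.
             replace (Rc * a0 - (Rc * a0)^3/(1-(Rc * a0)^2) * (/2 * (/(0+1) + /(0+2)))) with
               ((Rc * a0) * (1 - 7/4 * (Rc * a0)^2) / (1 - (Rc * a0)^2)) by (field; nra).
             apply Rdiv_lt_0_compat; [|nra]. apply Rmult_lt_0_compat; nra. }
           eapply Rlt_le_trans; [exact Hp|].
           apply (cv_ge _ _ _ 0 HLx). intros n _. apply (core _ Hx0 n).
        -- apply cv_scale with (u := xs (Rc * a0)); auto.
           intros n. apply alpha_xs. lra.
  - intros Rc L HR Hcv.
    assert (Hv : Un_cv (xs (618/1000)) (Rc * L)).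
    { apply cv_scale with (u := alpha_seq Rc (618 / 1000 / Rc)); auto.
      intros n. unfold xs. rewrite scale.
      replace (Rc * (618 / 1000 / Rc)) with (618/1000) by (field; lra). reflexivity. }
    destruct (final_bounds _ Hv) as [A B].
    unfold Rabs. destruct (Rcase_abs _); lra.
Qed.
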